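(* A convergence group $G$ is $g$-barrelled if and only if its locally quasi-convex modification $\tau(G)$ is $g$-barrelled.
   Context: All groups are abelian. A convergence group is an abelian group with a convergence structure (an assignment to each point $x$ of a collection of filters converging to $x$). This assignment must satisfy three conditions: point ultrafilters converge to their point; finite intersections of filters converging to $x$ converge to $x$; and finer filters converge. The group operation must be compatible: $\mathcal F\to x$, $\mathcal G\to y$ imply $\mathcal F-\mathcal G\to x-y$. Topological groups are convergence groups. $\mathbb T=\mathbb R/\mathbb Z$, $\mathbb T_+=\rho([-1/4,1/4])$ where $\rho:\mathbb R\to\mathbb T$ is the quotient map. $\Gamma G$ is the group of continuous homomorphisms $G\to\mathbb T$, and $\Gamma_s G$ is $\Gamma G$ with the topology of pointwise convergence. A set $M\subseteq\Gamma G$ is equicontinuous if for every filter $\mathcal F\to0$ in $G$, the filter generated by $\{\varphi(x):\varphi\in M,x\in F\}$, $F\in\mathcal F$, converges to $0$ in $\mathbb T$. A convergence group $G$ is $g$-barrelled if every compact subset of $\Gamma_s G$ is equicontinuous. A subset $A$ of a topological group $G$ is quasi-convex if for every $x\notin A$ there is a continuous character $\varphi$ with $\varphi(A)\subseteq\mathbb T_+$ and $\varphi(x)\notin\mathbb T_+$. A topological group is locally quasi-convex if it has a zero neighbourhood base of quasi-convex sets. The locally quasi-convex modification $\tau(G)$ of a convergence group $G$ is the finest locally quasi-convex group topology on $G$ coarser than the convergence structure of $G$. *)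

(* Defs.v *)
From Stdlib Require Import Reals List.
Open Scope R_scope.

Record AbGroup := {
  carrier :> Type;
  gadd : carrier -> carrier -> carrier;
  gopp : carrier -> carrier;
  gzero : carrier;
  gaddA : forall x y z, gadd x (gadd y z) = gadd (gadd x y) z;
  gaddC : forall x y, gadd x y = gadd y x;
  gadd0 : forall x, gadd gzero x = x;
  gaddN : forall x, gadd (gopp x) x = gzero
}.

Definition gsub (G : AbGroup) (x y : G) : G := gadd G x (gopp G y).

Definition filter_on (X : Type) := (X -> Prop) -> Prop.

Definition is_filter (X : Type) (F : filter_on X) : Prop :=
  F (fun _ => True) /\
  (forall A B : X -> Prop, F A -> (forall x, A x -> B x) -> F B) /\
  (forall A B : X -> Prop, F A -> F B -> F (fun x => A x /\ B x)) /\
  ~ F (fun _ => False).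

Definition point_filter (X : Type) (x : X) : filter_on X := fun A => A x.

Definition filter_inter (X : Type) (F H : filter_on X) : filter_on X :=
  fun A => F A /\ H A.

Definition finer (X : Type) (H F : filter_on X) : Prop :=
  forall A, F A -> H A.

Definition filter_sub (G : AbGroup) (F H : filter_on G) : filter_on G :=
  fun S => exists A B, F A /\ H B /\
           (forall a b, A a -> B b -> S (gsub G a b)).

Definition filter_image (X Y : Type) (f : X -> Y) (F : filter_on X)
  : filter_on Y :=
  fun S => exists A, F A /\ forall a, A a -> S (f a).

Definition convergence (X : Type) := filter_on X -> X -> Prop.

Definition is_conv_group (G : AbGroup) (lim : convergence G) : Prop :=
  (forall x : G, lim (point_filter G x) x) /\
  (forall (F H : filter_on G) x, is_filter G F -> is_filter G H ->
      lim F x -> lim H x -> lim (filter_inter G F H) x) /\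
  (forall (F H : filter_on G) x, is_filter G F -> is_filter G H ->
      lim F x -> finer G H F -> lim H x) /\
  (forall (F H : filter_on G) x y, is_filter G F -> is_filter G H ->
      lim F x -> lim H y -> lim (@filter_sub G F H) (gsub G x y)).

(** * The circle group T = R/Z, points represented by their
      representative in [0,1). *)
Definition tdist (r : R) : R := Rmin (frac_part r) (1 - frac_part r).

Definition tconv (F : filter_on R) (t : R) : Prop :=
  forall eps, 0 < eps ->
    exists A, F A /\ forall s, A s -> tdist (s - t) < eps.

Definition Tplus (r : R) : Prop := tdist r <= / 4.

(** continuous characters G -> T: a map phi with values in [0,1)
    (canonical representatives) such that phi (x+y) = phi x + phi y mod 1,
    continuous for the convergence structure. *)
Definition is_character (G : AbGroup) (lim : convergence G) (phi : G -> R)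
  : Prop :=
  (forall x, 0 <= phi x < 1) /\
  (forall x y, phi (gadd G x y) = frac_part (phi x + phi y)) /\
  (forall (F : filter_on G) x, is_filter G F -> lim F x ->
      tconv (filter_image G R phi F) (phi x)).

(** Compact subsets of Gamma_s G (pointwise convergence topology):
    every proper filter containing K has a cluster point in K. *)
Definition pw_nbhd (G : AbGroup) (psi : G -> R) (xs : list G) (eps : R)
  (chi : G -> R) : Prop :=
  forall x, In x xs -> tdist (chi x - psi x) < eps.

Definition compact_s (G : AbGroup) (lim : convergence G)
  (K : (G -> R) -> Prop) : Prop :=
  forall (FF : filter_on (G -> R)), is_filter (G -> R) FF -> FF K ->
    exists psi, K psi /\
      forall (xs : list G) eps (A : (G -> R) -> Prop), 0 < eps -> FF A ->
        exists chi, A chi /\ is_character G lim chi /\ pw_nbhd G psi xs eps chi.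

Definition equicontinuous (G : AbGroup) (lim : convergence G)
  (M : (G -> R) -> Prop) : Prop :=
  forall (F : filter_on G), is_filter G F -> lim F (gzero G) ->
    forall eps, 0 < eps ->
      exists A, F A /\ forall phi x, M phi -> A x -> tdist (phi x) < eps.

Definition gbarrelled (G : AbGroup) (lim : convergence G) : Prop :=
  forall K : (G -> R) -> Prop,
    (forall phi, K phi -> is_character G lim phi) ->
    compact_s G lim K -> equicontinuous G lim K.

Definition topology (X : Type) := (X -> Prop) -> Prop.

Definition top_lim (X : Type) (T : topology X) : convergence X :=
  fun F x => forall U, T U -> U x -> F U.

Definition is_group_topology (G : AbGroup) (T : topology G) : Prop :=
  T (fun _ => True) /\
  (forall U V, T U -> T V -> T (fun x => U x /\ V x)) /\
  (forall (I : Type) (Us : I -> G -> Prop), (forall i, T (Us i)) ->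
      T (fun x => exists i, Us i x)) /\
  (forall W x y, T W -> W (gsub G x y) ->
     exists U V, T U /\ T V /\ U x /\ V y /\
       forall a b, U a -> V b -> W (gsub G a b)).

Definition is_nbhd (X : Type) (T : topology X) (x : X) (U : X -> Prop)
  : Prop := exists V, T V /\ V x /\ forall y, V y -> U y.

Definition quasi_convex (G : AbGroup) (T : topology G) (A : G -> Prop)
  : Prop :=
  forall x, ~ A x ->
    exists phi, is_character G (top_lim G T) phi /\
      (forall a, A a -> Tplus (phi a)) /\ ~ Tplus (phi x).

Definition locally_quasi_convex (G : AbGroup) (T : topology G) : Prop :=
  is_group_topology G T /\
  forall U, is_nbhd G T (gzero G) U ->
    exists W, quasi_convex G T W /\ is_nbhd G T (gzero G) W /\
      forall y, W y -> U y.

Definition coarser_than_conv (G : AbGroup) (T : topology G)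
  (lim : convergence G) : Prop :=
  forall F x, is_filter G F -> lim F x -> top_lim G T F x.

Definition is_lqc_modification (G : AbGroup) (lim : convergence G)
  (T : topology G) : Prop :=
  locally_quasi_convex G T /\ coarser_than_conv G T lim /\
  forall T', locally_quasi_convex G T' -> coarser_than_conv G T' lim ->
    forall U, T' U -> T U.

(* Main.v *)
Require Import Defs.
From Stdlib Require Import Reals List Lra Lia ZArith Classical.
Open Scope R_scope.

Definition eqZ (r s : R) := exists n : Z, r = s + IZR n.

Lemma frac_eq r : frac_part r = r - IZR (Int_part r).
Proof. reflexivity. Qed.

Lemma frac_bounds r : 0 <= frac_part r < 1.
Proof. destruct (base_fp r); lra. Qed.

Lemma tdist_le r n : tdist r <= Rabs (r - IZR n).
Proof.
  unfold tdist. pose proof (frac_bounds r) as Hb. rewrite frac_eq in *.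
  set (k := (n - Int_part r)%Z).
  replace (r - IZR n) with ((r - IZR (Int_part r)) - IZR k)
    by (unfold k; rewrite minus_IZR; ring).
  destruct (Z_le_gt_dec k 0) as [Hk|Hk].
  - apply IZR_le in Hk. eapply Rle_trans; [apply Rmin_l|].
    rewrite Rabs_right; lra.
  - assert (Hk1 : (1 <= k)%Z) by lia. apply IZR_le in Hk1.
    eapply Rle_trans; [apply Rmin_r|].
    rewrite Rabs_left1; lra.
Qed.

Lemma tdist_ex r : exists n, tdist r = Rabs (r - IZR n).
Proof.
  unfold tdist. pose proof (frac_bounds r) as Hb. rewrite frac_eq in *.
  destruct (Rle_dec (r - IZR (Int_part r)) (1 - (r - IZR (Int_part r)))).
  - exists (Int_part r). rewrite Rmin_left by lra. rewrite Rabs_right; lra.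
  - exists (Int_part r + 1)%Z. rewrite Rmin_right by lra. rewrite plus_IZR.
    rewrite Rabs_left1; lra.
Qed.

Lemma tdist_nonneg r : 0 <= tdist r.
Proof. destruct (tdist_ex r) as [n ->]. apply Rabs_pos. Qed.

Lemma tdist_Z r n : tdist (r + IZR n) = tdist r.
Proof.
  apply Rle_antisym.
  - destruct (tdist_ex r) as [m Hm]. rewrite Hm.
    eapply Rle_trans; [apply (tdist_le _ (m + n))|]. rewrite plus_IZR.
    right; f_equal; ring.
  - destruct (tdist_ex (r + IZR n)) as [m Hm]. rewrite Hm.
    eapply Rle_trans; [apply (tdist_le _ (m - n))|]. rewrite minus_IZR.
    right; f_equal; ring.
Qed.

Lemma tdist_eqZ r s : eqZ r s -> tdist r = tdist s.
Proof. intros [n ->]. apply tdist_Z. Qed.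

Lemma tdist_add a b : tdist (a + b) <= tdist a + tdist b.
Proof.
  destruct (tdist_ex a) as [n Hn]; destruct (tdist_ex b) as [m Hm].
  rewrite Hn, Hm. eapply Rle_trans; [apply (tdist_le _ (n + m))|].
  rewrite plus_IZR. replace (a + b - (IZR n + IZR m)) with ((a - IZR n) + (b - IZR m)) by ring.
  apply Rabs_triang.
Qed.

Lemma tdist_opp a : tdist (- a) = tdist a.
Proof.
  apply Rle_antisym.
  - destruct (tdist_ex a) as [n Hn]. rewrite Hn.
    eapply Rle_trans; [apply (tdist_le _ (- n))|]. rewrite opp_IZR.
    rewrite <- Rabs_Ropp. right; f_equal; ring.
  - destruct (tdist_ex (-a)) as [n Hn]. rewrite Hn.
    eapply Rle_trans; [apply (tdist_le _ (- n))|]. rewrite opp_IZR.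
    rewrite <- Rabs_Ropp. right; f_equal; ring.
Qed.

Lemma tdist_sub a b : tdist (a - b) <= tdist a + tdist b.
Proof. unfold Rminus. rewrite <- (tdist_opp b). apply tdist_add. Qed.

Lemma tdist_mul k r : tdist (IZR k * r) <= Rabs (IZR k) * tdist r.
Proof.
  destruct (tdist_ex r) as [n Hn]. rewrite Hn.
  eapply Rle_trans; [apply (tdist_le _ (k * n))|]. rewrite mult_IZR.
  rewrite <- Rabs_mult. right; f_equal; ring.
Qed.

Lemma tdist_0 : tdist 0 = 0.
Proof.
  apply Rle_antisym; [|apply tdist_nonneg].
  eapply Rle_trans; [apply (tdist_le _ 0)|]. rewrite Rminus_0_r, Rabs_R0; lra.
Qed.

Lemma tdist_half r : tdist r <= 1/2.
Proof.
  unfold tdist. pose proof (frac_bounds r).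
  destruct (Rle_dec (frac_part r) (1 - frac_part r)).
  - rewrite Rmin_left; lra.
  - rewrite Rmin_right; lra.
Qed.

Lemma tdist_double r : tdist r <= /4 -> tdist (2 * r) = 2 * tdist r.
Proof.
  intros H. apply Rle_antisym.
  - pose proof (tdist_mul 2 r). rewrite Rabs_right in H0 by lra. exact H0.
  - destruct (tdist_ex (2*r)) as [m Hm]. rewrite Hm.
    destruct (tdist_ex r) as [n Hn].
    destruct (Zeven_odd_dec m) as [He|Ho].
    + destruct (Zeven_ex m He) as [p ->]. rewrite mult_IZR.
      replace (2 * r - IZR 2 * IZR p) with (2 * (r - IZR p)) by ring.
      rewrite Rabs_mult, Rabs_right by lra. pose proof (tdist_le r p). lra.
    + destruct (Zodd_ex m Ho) as [p ->]. rewrite plus_IZR, mult_IZR.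
      assert (Hd : Rabs (IZR n - IZR p) >= 1 \/ n = p) .
      { destruct (Z.eq_dec n p); [now right|left].
        rewrite <- minus_IZR. destruct (Z_le_gt_dec (n - p) 0).
        - assert (n - p <= -1)%Z by lia. apply IZR_le in H0.
          rewrite Rabs_left1; lra.
        - assert (1 <= n - p)%Z by lia. apply IZR_le in H0.
          rewrite Rabs_right; lra. }
      rewrite Hn in H.
      assert (Hx : Rabs (2 * r - (IZR 2 * IZR p + 1)) >= 1/2).
      { destruct Hd as [Hd | ->].
        - assert (Rabs (IZR n - IZR p) <= Rabs (r - IZR n) + Rabs (r - IZR p)).
          { replace (IZR n - IZR p) with (-(r - IZR n) + (r - IZR p)) by ring.
            eapply Rle_trans; [apply Rabs_triang|]. rewrite Rabs_Ropp. lra. }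
          replace (2 * r - (IZR 2 * IZR p + 1)) with (2 * ((r - IZR p) - /2)) by field.
          rewrite Rabs_mult, Rabs_right by lra.
          assert (Rabs (r - IZR p) >= 3/4) by lra.
          assert (Rabs (r - IZR p - /2) >= /4).
          { pose proof (Rabs_triang_inv (r - IZR p) (/2)). rewrite (Rabs_right (/2)) in H2 by lra. lra. }
          lra.
        - replace (2 * r - (IZR 2 * IZR p + 1)) with (2 * (r - IZR p) - 1) by ring.
          pose proof (Rabs_triang_inv 1 (2 * (r - IZR p))).
          rewrite Rabs_mult, Rabs_R1, (Rabs_right 2) in H0 by lra.
          rewrite <- Rabs_Ropp. replace (- (2 * (r - IZR p) - 1)) with (1 - 2 * (r - IZR p)) by ring.
          lra. }
      rewrite Hn. lra.
Qed.

Lemma eqZ_refl r : eqZ r r.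
Proof. exists 0%Z. ring. Qed.
Lemma eqZ_sym r s : eqZ r s -> eqZ s r.
Proof. intros [n H]. exists (- n)%Z. rewrite opp_IZR. lra. Qed.
Lemma eqZ_trans r s t : eqZ r s -> eqZ s t -> eqZ r t.
Proof. intros [n H] [m H']. exists (m + n)%Z. rewrite plus_IZR. lra. Qed.
Lemma eqZ_add r s r' s' : eqZ r s -> eqZ r' s' -> eqZ (r + r') (s + s').
Proof. intros [n H] [m H']. exists (n + m)%Z. rewrite plus_IZR. lra. Qed.
Lemma eqZ_sub r s r' s' : eqZ r s -> eqZ r' s' -> eqZ (r - r') (s - s').
Proof. intros [n H] [m H']. exists (n - m)%Z. rewrite minus_IZR. lra. Qed.
Lemma eqZ_mul k r s : eqZ r s -> eqZ (IZR k * r) (IZR k * s).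
Proof. intros [n H]. exists (k * n)%Z. rewrite mult_IZR, H. ring. Qed.
Lemma eqZ_eq r s : r = s -> eqZ r s.
Proof. intros ->; apply eqZ_refl. Qed.
Lemma frac_eqZ r : eqZ (frac_part r) r.
Proof. exists (- Int_part r)%Z. rewrite frac_eq, opp_IZR. ring. Qed.

Lemma frac_unique r s : 0 <= s < 1 -> eqZ r s -> frac_part r = s.
Proof.
  intros Hs Hr. pose proof (frac_bounds r).
  destruct (eqZ_trans _ _ _ (frac_eqZ r) Hr) as [k Hk].
  assert (-1 < IZR k < 1) by lra.
  destruct H0 as [H1 H2]. apply lt_IZR in H1. apply lt_IZR in H2.
  assert (k = 0%Z) by lia. subst. rewrite Hk. simpl. ring.
Qed.

Lemma gadd0r (G : AbGroup) (x : G) : gadd G x (gzero G) = x.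
Proof. rewrite gaddC. apply gadd0. Qed.

Lemma gsub_addK (G : AbGroup) (u v : G) : gadd G (gsub G u v) v = u.
Proof. unfold gsub. rewrite <- gaddA, gaddN. apply gadd0r. Qed.

Lemma gsubxx (G : AbGroup) (x : G) : gsub G x x = gzero G.
Proof. unfold gsub. rewrite gaddC. apply gaddN. Qed.

Definition addch (G : AbGroup) (phi : G -> R) :=
  forall x y, phi (gadd G x y) = frac_part (phi x + phi y).

Lemma ch_add (G : AbGroup) phi (H : addch G phi) x y :
  eqZ (phi (gadd G x y)) (phi x + phi y).
Proof. rewrite H. apply frac_eqZ. Qed.

Lemma ch_sub (G : AbGroup) phi (H : addch G phi) u v :
  eqZ (phi (gsub G u v)) (phi u - phi v).
Proof.
  pose proof (ch_add G phi H (gsub G u v) v) as E. rewrite gsub_addK in E.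
  destruct E as [n E]. exists (- n)%Z. rewrite opp_IZR. lra.
Qed.

Lemma ch_tri (G : AbGroup) phi (H : addch G phi) y a c :
  tdist (phi (gsub G y c)) <= tdist (phi (gsub G y a)) + tdist (phi (gsub G a c)).
Proof.
  rewrite (tdist_eqZ _ (phi (gsub G y a) + phi (gsub G a c))).
  - apply tdist_add.
  - eapply eqZ_trans; [apply ch_sub; auto|].
    apply eqZ_sym. eapply eqZ_trans.
    + apply eqZ_add; apply ch_sub; auto.
    + apply eqZ_eq. ring.
Qed.

Lemma ch_sub0 (G : AbGroup) phi (H : addch G phi) z :
  tdist (phi (gsub G z (gzero G))) = tdist (phi z).
Proof.
  apply tdist_eqZ. eapply eqZ_trans; [apply ch_sub; auto|].
  pose proof (ch_sub G phi H z z) as E. rewrite gsubxx in E.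
  assert (E0 : eqZ (phi (gzero G)) 0).
  { eapply eqZ_trans; [exact E|]. apply eqZ_eq; ring. }
  eapply eqZ_trans; [apply eqZ_sub; [apply eqZ_refl|exact E0]|]. apply eqZ_eq; ring.
Qed.

Lemma ch_subxx (G : AbGroup) phi (H : addch G phi) z :
  tdist (phi (gsub G z z)) = 0.
Proof.
  rewrite (tdist_eqZ _ 0). apply tdist_0.
  eapply eqZ_trans; [apply ch_sub; auto|]. apply eqZ_eq; ring.
Qed.

Lemma ch_subsub (G : AbGroup) phi (H : addch G phi) a b x y :
  tdist (phi (gsub G (gsub G a b) (gsub G x y))) <=
  tdist (phi (gsub G a x)) + tdist (phi (gsub G b y)).
Proof.
  rewrite (tdist_eqZ _ (phi (gsub G a x) - phi (gsub G b y))).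
  - apply tdist_sub.
  - eapply eqZ_trans; [apply ch_sub; auto|].
    eapply eqZ_trans; [apply eqZ_sub; apply ch_sub; auto|].
    apply eqZ_sym. eapply eqZ_trans; [apply eqZ_sub; apply ch_sub; auto|].
    apply eqZ_eq; ring.
Qed.

Lemma pow2_IZR j : 2 ^ j = IZR (2 ^ Z.of_nat j).
Proof. apply pow_IZR. Qed.

Lemma pow2_pos j : 0 < 2 ^ j.
Proof. apply pow_lt; lra. Qed.

Lemma doubling m : forall t, (forall j, (j <= m)%nat -> tdist (2 ^ j * t) <= /4) ->
  tdist t <= / 2 ^ (m + 2).
Proof.
  induction m as [|m IH]; intros t H.
  - specialize (H 0%nat (le_n _)). simpl in *. rewrite Rmult_1_l in H. lra.
  - assert (H0 := H 0%nat ltac:(lia)). simpl in H0. rewrite Rmult_1_l in H0.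
    assert (H2 : tdist (2 * t) <= / 2 ^ (m + 2)).
    { apply IH. intros j Hj. specialize (H (S j) ltac:(lia)). simpl in H.
      replace (2^j * (2*t)) with (2 * 2^j * t) by ring. exact H. }
    rewrite tdist_double in H2 by exact H0.
    replace (S m + 2)%nat with (S (m + 2)) by lia. simpl.
    pose proof (pow2_pos (m+2)). rewrite Rinv_mult. lra.
Qed.

Section TC.
Variable G : AbGroup.
Variable C : (G -> R) -> Prop.
Hypothesis HC : forall phi, C phi -> addch G phi.

Definition TC : topology G := fun U => forall x, U x -> exists r, 0 < r /\
  forall y, (forall phi, C phi -> tdist (phi (gsub G y x)) <= r) -> U y.

Definition ballC (c : G) (r : R) (a : G) : Prop := exists s, 0 < s /\
  forall phi, C phi -> tdist (phi (gsub G a c)) + s <= r.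

Lemma ball_open c r : TC (ballC c r).
Proof.
  intros x [s [Hs Hx]]. exists (s/2). split; [lra|].
  intros y Hy. exists (s/2). split; [lra|]. intros phi Hp.
  pose proof (ch_tri G phi (HC phi Hp) y x c). specialize (Hy phi Hp). specialize (Hx phi Hp).
  lra.
Qed.

Lemma ball_center c r : 0 < r -> ballC c r c.
Proof.
  intros Hr. exists r. split; auto. intros phi Hp. rewrite ch_subxx; auto. lra.
Qed.

Lemma ball_le c r a : ballC c r a -> forall phi, C phi -> tdist (phi (gsub G a c)) <= r.
Proof. intros [s [Hs H]] phi Hp. specialize (H phi Hp). lra. Qed.

Lemma TC_group : is_group_topology G TC.
Proof.
  split; [|split; [|split]].
  - intros x _. exists 1. split; [lra|]. auto.
  - intros U V HU HV x [Ux Vx].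
    destruct (HU x Ux) as [r1 [H1 K1]]. destruct (HV x Vx) as [r2 [H2 K2]].
    exists (Rmin r1 r2). split; [apply Rmin_pos; auto|].
    intros y Hy. split.
    + apply K1. intros phi Hp. specialize (Hy phi Hp). pose proof (Rmin_l r1 r2). lra.
    + apply K2. intros phi Hp. specialize (Hy phi Hp). pose proof (Rmin_r r1 r2). lra.
  - intros I Us HUs x [i Hi]. destruct (HUs i x Hi) as [r [Hr K]].
    exists r. split; auto. intros y Hy. exists i. auto.
  - intros W x y HW Hxy. destruct (HW _ Hxy) as [r [Hr K]].
    exists (ballC x (r/2)), (ballC y (r/2)).
    split; [apply ball_open|]. split; [apply ball_open|].
    split; [apply ball_center; lra|]. split; [apply ball_center; lra|].
    intros a b Ha Hb. apply K. intros phi Hp.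
    pose proof (ch_subsub G phi (HC phi Hp) a b x y).
    pose proof (ball_le _ _ _ Ha phi Hp). pose proof (ball_le _ _ _ Hb phi Hp). lra.
Qed.

Definition psi (phi : G -> R) (j : nat) (z : G) : R := frac_part (2 ^ j * phi z).

Lemma psi_sub phi j a x : C phi ->
  eqZ (psi phi j a - psi phi j x) (IZR (2 ^ Z.of_nat j) * phi (gsub G a x)).
Proof.
  intros Hp. unfold psi.
  eapply eqZ_trans; [apply eqZ_sub; apply frac_eqZ|].
  rewrite pow2_IZR. apply eqZ_sym.
  eapply eqZ_trans; [apply eqZ_mul; apply ch_sub; apply HC; auto|].
  apply eqZ_eq; ring.
Qed.

Lemma psi_tdist phi j z : C phi -> tdist (psi phi j z) <= 2 ^ j * tdist (phi z).
Proof.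
  intros Hp. unfold psi. rewrite (tdist_eqZ _ (2 ^ j * phi z)) by apply frac_eqZ.
  rewrite pow2_IZR. eapply Rle_trans; [apply tdist_mul|].
  rewrite Rabs_right; [lra|]. rewrite <- pow2_IZR. left; apply pow2_pos.
Qed.

Lemma psi_char phi j : C phi -> is_character G (top_lim G TC) (psi phi j).
Proof.
  intros Hp. split; [|split].
  - intros x. apply frac_bounds.
  - intros x y. unfold psi at 1. apply frac_unique; [apply frac_bounds|].
    eapply eqZ_trans; [|apply eqZ_sym; apply frac_eqZ].
    unfold psi. eapply eqZ_trans; [|apply eqZ_add; apply eqZ_sym; apply frac_eqZ].
    rewrite pow2_IZR. eapply eqZ_trans; [apply eqZ_mul; apply ch_add; apply HC; auto|].
    apply eqZ_eq; ring.
  - intros F x HF Hl eps Heps.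
    pose proof (pow2_pos j) as Hpj.
    set (r := eps / (2 * 2 ^ j)).
    assert (Hr : 0 < r) by (unfold r; apply Rdiv_lt_0_compat; lra).
    assert (Hr2 : 2 ^ j * r < eps).
    { unfold r. replace (2 ^ j * (eps / (2 * 2 ^ j))) with (eps / 2) by (field; lra). lra. }
    exists (fun s => tdist (s - psi phi j x) < eps). split.
    + exists (ballC x r). split.
      * apply Hl; [apply ball_open|apply ball_center; auto].
      * intros a Ha. rewrite (tdist_eqZ _ _ (psi_sub phi j a x Hp)).
        eapply Rle_lt_trans; [apply tdist_mul|].
        rewrite <- pow2_IZR, Rabs_right by lra.
        pose proof (ball_le _ _ _ Ha phi Hp).
        eapply Rle_lt_trans; [|exact Hr2]. apply Rmult_le_compat_l; lra.
    + intros s Hs; exact Hs.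
Qed.

Lemma small_pow r : 0 < r -> exists m, / 2 ^ (m + 2) <= r.
Proof.
  intros Hr. destruct (pow_lt_1_zero (/2) ltac:(rewrite Rabs_right; lra) r Hr) as [N HN].
  exists N. specialize (HN (N + 2)%nat ltac:(lia)).
  rewrite Rabs_right in HN by (apply Rle_ge, pow_le; lra).
  rewrite pow_inv in HN. lra.
Qed.

Lemma TC_lqc : locally_quasi_convex G TC.
Proof.
  split; [apply TC_group|].
  intros U [V [HV [V0 VU]]].
  destruct (HV _ V0) as [r [Hr K]].
  destruct (small_pow r Hr) as [m Hm].
  set (rho := / 2 ^ (m + 2)).
  assert (Hrho : 0 < rho) by (apply Rinv_0_lt_compat, pow2_pos).
  exists (fun z => forall phi, C phi -> tdist (phi (gsub G z (gzero G))) <= rho).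
  split; [|split].
  - intros x Hx. apply not_all_ex_not in Hx. destruct Hx as [phi Hx].
    apply imply_to_and in Hx. destruct Hx as [Hp Hx]. rewrite ch_sub0 in Hx by auto.
    assert (Hj : exists j, (j <= m)%nat /\ ~ tdist (2 ^ j * phi x) <= /4).
    { apply NNPP. intros Hn. apply Hx. apply doubling. intros j Hj.
      apply NNPP. intros Hc. apply Hn. exists j. auto. }
    destruct Hj as [j [Hjm Hj]].
    exists (psi phi j). split; [apply psi_char; auto|]. split.
    + intros a Ha. unfold Tplus. specialize (Ha phi Hp). rewrite ch_sub0 in Ha by auto.
      eapply Rle_trans; [apply psi_tdist; auto|].
      assert (2 ^ j * rho <= /4).
      { unfold rho. rewrite pow_add.
        assert (2 ^ j <= 2 ^ m) by (apply Rle_pow; lra || lia).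
        pose proof (pow2_pos j). pose proof (pow2_pos m).
        replace (/4) with (2 ^ m * / (2 ^ m * 2 ^ 2)) by (field; lra).
        apply Rmult_le_compat_r; [|exact H].
        left; apply Rinv_0_lt_compat. simpl; nra. }
      pose proof (tdist_nonneg (phi a)). 
      eapply Rle_trans; [|exact H]. apply Rmult_le_compat_l; [left; apply pow2_pos|]. exact Ha.
    + unfold Tplus, psi. rewrite (tdist_eqZ _ (2 ^ j * phi x)) by apply frac_eqZ. exact Hj.
  - exists (ballC (gzero G) rho). split; [apply ball_open|]. split; [apply ball_center; auto|].
    intros y Hy phi Hp. apply (ball_le _ _ _ Hy phi Hp).
  - intros y Hy. apply VU, K. intros phi Hp. specialize (Hy phi Hp). unfold rho in Hy. lra.
Qed.

End TC.

Lemma point_filter_is (G : AbGroup) (x : G) : is_filter G (point_filter G x).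
Proof.
  unfold point_filter. split; [exact I|split; [|split]]; auto.
Qed.

Lemma filter_sub_is (G : AbGroup) F x : is_filter G F ->
  is_filter G (filter_sub G F (point_filter G x)).
Proof.
  intros [H1 [H2 [H3 H4]]]. unfold filter_sub, point_filter.
  split; [|split; [|split]].
  - exists (fun _ => True), (fun _ => True). auto.
  - intros A B [A1 [B1 [HA [HB Hab]]]] HAB. exists A1, B1. auto.
  - intros A B [A1 [B1 [HA [HB Hab]]]] [A2 [B2 [HA' [HB' Hab']]]].
    exists (fun z => A1 z /\ A2 z), (fun z => B1 z /\ B2 z).
    split; [apply H3; auto|]. split; [auto|]. intros a b [] []; split; auto.
  - intros [A [B [HA [HB Hab]]]]. apply H4. apply (H2 A); auto.
    intros a Ha. exact (Hab a x Ha HB).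
Qed.

Lemma ch_zero (G : AbGroup) phi : addch G phi -> eqZ (phi (gzero G)) 0.
Proof.
  intros H. pose proof (ch_sub G phi H (gzero G) (gzero G)) as E. rewrite gsubxx in E.
  eapply eqZ_trans; [exact E|]. apply eqZ_eq; ring.
Qed.

Lemma TC_coarser (G : AbGroup) lim C : is_conv_group G lim ->
  (forall phi, C phi -> addch G phi) -> equicontinuous G lim C ->
  coarser_than_conv G (TC G C) lim.
Proof.
  intros HG HC HE F x HF Hl U HU Ux.
  destruct (HU x Ux) as [r [Hr K]].
  destruct HG as [G1 [G2 [G3 G4]]].
  assert (Hl2 := G4 F (point_filter G x) x x HF (point_filter_is G x) Hl (G1 x)).
  rewrite gsubxx in Hl2.
  destruct (HE _ (filter_sub_is G F x HF) Hl2 r Hr) as [A' [[A [B [HA [HB Hab]]]] HA']].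
  destruct HF as [_ [Hm _]]. apply (Hm A); [exact HA|].
  intros a Ha. apply K. intros phi Hp. left. apply HA'; auto.
Qed.

Lemma T_ball (G : AbGroup) lim T C : is_conv_group G lim -> is_lqc_modification G lim T ->
  (forall phi, C phi -> addch G phi) -> equicontinuous G lim C ->
  forall c r, T (ballC G C c r).
Proof.
  intros HG [_ [_ HM]] HC HE c r. apply (HM (TC G C)).
  - apply TC_lqc; auto.
  - apply TC_coarser; auto.
  - apply ball_open; auto.
Qed.

Lemma char_add (G : AbGroup) lim phi : is_character G lim phi -> addch G phi.
Proof. intros [_ [H _]]. exact H. Qed.

Lemma T_equi (G : AbGroup) lim T C : is_conv_group G lim -> is_lqc_modification G lim T ->
  (forall phi, C phi -> addch G phi) -> equicontinuous G lim C ->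
  equicontinuous G (top_lim G T) C.
Proof.
  intros HG HT HC HE F HF Hl eps Heps.
  exists (ballC G C (gzero G) (eps/2)). split.
  - apply Hl; [apply (T_ball G lim T C); auto|apply ball_center; auto; lra].
  - intros phi x Hp Hx. pose proof (ball_le G C _ _ _ Hx phi Hp).
    rewrite ch_sub0 in H by auto. lra.
Qed.

Lemma lim_to_T_char (G : AbGroup) lim T phi : is_conv_group G lim -> is_lqc_modification G lim T ->
  is_character G lim phi -> is_character G (top_lim G T) phi.
Proof.
  intros HG HT Hc. pose proof (char_add G lim phi Hc) as Ha.
  set (C := fun psi => psi = phi).
  assert (HC : forall psi, C psi -> addch G psi) by (intros psi ->; auto).
  assert (HE : equicontinuous G lim C).
  { intros F HF Hl eps Heps. destruct Hc as [_ [_ Hcont]].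
    destruct (Hcont F (gzero G) HF Hl eps Heps) as [A' [[A [HA HAA]] HA']].
    exists A. split; auto. intros psi x -> Hx.
    specialize (HA' _ (HAA x Hx)).
    rewrite (tdist_eqZ (phi x - phi (gzero G)) (phi x)) in HA'; auto.
    eapply eqZ_trans; [apply eqZ_sub; [apply eqZ_refl|apply ch_zero; auto]|].
    apply eqZ_eq; ring. }
  destruct Hc as [H1 [H2 _]]. split; [auto|split; [auto|]].
  intros F x HF Hl eps Heps.
  exists (fun s => tdist (s - phi x) < eps). split; [|auto].
  exists (ballC G C x (eps/2)). split.
  - apply Hl; [apply (T_ball G lim T C); auto|apply ball_center; auto; lra].
  - intros a Hb. pose proof (ball_le G C _ _ _ Hb phi eq_refl).
    rewrite (tdist_eqZ _ _ (ch_sub G phi Ha a x)) in H. lra.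
Qed.

Lemma T_to_lim_char (G : AbGroup) lim T phi : is_lqc_modification G lim T ->
  is_character G (top_lim G T) phi -> is_character G lim phi.
Proof.
  intros [_ [Hc _]] [H1 [H2 H3]]. split; [auto|split; [auto|]].
  intros F x HF Hl. apply H3; auto.
Qed.

Theorem corollary2p12 (G : AbGroup) (lim : convergence G)
  (HG : is_conv_group G lim) (T : topology G)
  (HT : is_lqc_modification G lim T) :
  gbarrelled G lim <-> gbarrelled G (top_lim G T).
Proof.
  split.
  - intros Hb K HK Hcomp.
    assert (HK' : forall phi, K phi -> is_character G lim phi)
      by (intros; eapply T_to_lim_char; eauto).
    apply (T_equi G lim T K); auto.
    + intros phi Hp. eapply char_add; eauto.
    + apply Hb; auto. intros FF HFF HK0. destruct (Hcomp FF HFF HK0) as [p [Kp Hp]].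
      exists p. split; auto. intros xs eps A He HA.
      destruct (Hp xs eps A He HA) as [chi [Ac [Cc Nc]]].
      exists chi. split; auto. split; auto. eapply T_to_lim_char; eauto.
  - intros Hb K HK Hcomp.
    assert (HK' : forall phi, K phi -> is_character G (top_lim G T) phi)
      by (intros; eapply lim_to_T_char; eauto).
    assert (HE : equicontinuous G (top_lim G T) K).
    { apply Hb; auto. intros FF HFF HK0. destruct (Hcomp FF HFF HK0) as [p [Kp Hp]].
      exists p. split; auto. intros xs eps A He HA.
      destruct (Hp xs eps A He HA) as [chi [Ac [Cc Nc]]].
      exists chi. split; auto. split; auto. eapply lim_to_T_char; eauto. }
    intros F HF Hl eps Heps. apply HE; auto.
    destruct HT as [_ [Hc _]]. apply Hc; auto.
Qed.
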